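(* Fix $M>0$. If $c\in\ell_{\infty,M}(X^\ast,\mathbb{K}^\ell)$ and $d\in\ell_{\infty,M}(X^\ast,\mathbb{K}^m)$, then $c\circ d\in\ell_{\infty,M_\epsilon}(X^\ast,\mathbb{K}^\ell)$ for any $M_\epsilon=M(1+\epsilon)$ with $\epsilon>\phi(m\|d\|_{\ell_\infty,M})$, where $\phi(x)=x/2+\sqrt{x^2/4+x}$, and $$\|c\circ d\|_{\ell_\infty,M_\epsilon}\leq \|c\|_{\ell_\infty,M}\,(K_\epsilon\circ\phi)(m\|d\|_{\ell_\infty,M}),$$ where $K_\epsilon(a)=\sup_{\eta\in X^\ast}(|\eta|+1)(1+a)^{|\eta|}/(1+\epsilon)^{|\eta|}$.
   Context: $\mathbb{K}\in\{\mathbb{R},\mathbb{C}\}$. $X=\{x_0,x_1,\ldots,x_m\}$ is a finite alphabet, $X^\ast$ its set of words (including the empty word $\emptyset$), $|\eta|$ the length. $\mathbb{K}^\ell\langle\langle X\rangle\rangle$ is the set of maps $X^\ast\to\mathbb{K}^\ell$, written $c=\sum_\eta (c,\eta)\eta$. For $M>0$, $\|c\|_{\ell_\infty,M}=\sup_\eta|(c,\eta)|/(M^{|\eta|}|\eta|!)$ with $|z|=\max_i|z_i|$, and $\ell_{\infty,M}(X^\ast,\mathbb{K}^\ell)$ is the Banach space of series with finite norm. The shuffle product $\sqcup\!\sqcup$ is the bilinear product determined on words by $(x_i\eta)\sqcup\!\sqcup(x_j\xi)=x_i(\eta\sqcup\!\sqcup(x_j\xi))+x_j((x_i\eta)\sqcup\!\sqcup\xi)$,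 $\eta\sqcup\!\sqcup\emptyset=\emptyset\sqcup\!\sqcup\eta=\eta$. Composition product: for $c\in\mathbb{K}^\ell\langle\langle X\rangle\rangle$, $d\in\mathbb{K}^m\langle\langle X\rangle\rangle$ with components $d[1],\ldots,d[m]$ and $d[0]:=\mathbf{1}=1\cdot\emptyset$, let $\psi_d$ be the algebra homomorphism from words to linear endomorphisms of $\mathbb{K}\langle\langle X\rangle\rangle$ given by $\psi_d(\emptyset)=\mathrm{id}$, $\psi_d(x_i\eta)=\psi_d(x_i)\circ\psi_d(\eta)$, $\psi_d(x_i)(e)=x_0(d[i]\sqcup\!\sqcup e)$, $i=0,\ldots,m$; then $c\circ d=\sum_{\eta\in X^\ast}(c,\eta)\,\psi_d(\eta)(\mathbf{1})$. *)

(* Defs.v *)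
From HB Require Import structures.
From mathcomp Require Import all_boot all_order all_algebra.
From mathcomp Require Import all_classical all_reals.
From mathcomp Require Import ereal.
From mathcomp.real_closed Require Import complex.

Set Implicit Arguments.
Unset Strict Implicit.
Unset Printing Implicit Defensive.

Import Order.TTheory GRing.Theory Num.Theory.
Local Open Scope ring_scope.

(* Alphabet X = {x_0, ..., x_m} is 'I_m.+1 ; words are sequences of letters;
   the empty word is [::]. *)
Definition word (m : nat) := seq 'I_m.+1.

(* Shuffle product of two words, as a list of words (with multiplicity):
   (x_i u) ш (x_j v) = x_i (u ш x_j v) + x_j (x_i u ш v),  u ш [] = [] ш u = u *)
Fixpoint shw {T : Type} (u : seq T) : seq T -> seq (seq T) :=
  match u with
  | [::] => fun v => [:: v]
  | a :: u' =>
      fix shw_v (v : seq T) : seq (seq T) :=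
        match v with
        | [::] => [:: a :: u']
        | b :: v' => map (cons a) (shw u' v) ++ map (cons b) (shw_v v')
        end
  end.

Section Series.
Variable K : comNzRingType.
Variable m : nat.

Definition series := word m -> K.

Definition one_series : series := fun nu => (nu == [::])%:R.

(* bilinear extension of the word shuffle to series: since every word of
   u ш v has length |u|+|v|, the coefficient of nu only involves words u,v
   with |u| + |v| = |nu| (locally finite sum). *)
Definition shuffle (a b : series) : series := fun nu =>
  \sum_(i < (size nu).+1)
    \sum_(u : i.-tuple 'I_m.+1)
      \sum_(v : (size nu - i).-tuple 'I_m.+1)
        a u * b v *+ count_mem nu (shw (u : seq _) (v : seq _)).

(* d in K^m<<X>> is a map from words to K^m; its components are d[1..m],
   and d[0] := 1.  Component index i : 'I_m.+1 (the letter x_i). *)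
Definition dcomp (d : word m -> 'I_m -> K) (i : 'I_m.+1) : series :=
  match unlift ord0 i with
  | Some j => fun w => d w j
  | None => one_series
  end.

(* psi_d(x_i)(e) = x_0 (d[i] ш e) *)
Definition psi_letter (d : word m -> 'I_m -> K) (i : 'I_m.+1) (e : series)
  : series := fun nu =>
  match nu with
  | [::] => 0
  | x :: nu' => (x == ord0)%:R * shuffle (dcomp d i) e nu'
  end.

Definition psi (d : word m -> 'I_m -> K) (eta : word m) (e : series) : series :=
  foldr (psi_letter d) e eta.

(* Composition product c o d = sum_eta (c,eta) psi_d(eta)(1).  The series
   psi_d(eta)(1) is supported on words of length >= |eta|, so the coefficient
   of nu is the finite sum over words eta with |eta| <= |nu|. *)
Definition comp (l : nat) (c : word m -> 'I_l -> K) (d : word m -> 'I_m -> K)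
  : word m -> 'I_l -> K := fun nu j =>
  \sum_(k < (size nu).+1) \sum_(eta : k.-tuple 'I_m.+1)
     c eta j * psi d eta one_series nu.

End Series.

Definition phi (R : realType) (x : R) : R := x / 2 + Num.sqrt (x ^+ 2 / 4 + x).

Section Norms.
Variable R : realType.
Variable K : comNzRingType.
Variable absK : K -> R.
Variable m : nat.

Definition vabs (l : nat) (z : 'I_l -> K) : R := \big[Num.max/0]_(i < l) absK (z i).

(* ||c||_{l_oo,M} = sup_eta |(c,eta)| / (M^|eta| |eta|!), as an extended real;
   c is in l_{oo,M} iff this is < +oo. *)
Definition linf_norm (M : R) (l : nat) (c : word m -> 'I_l -> K) : \bar R :=
  ereal_sup [set ((vabs (c eta)) / (M ^+ size eta * (size eta)`!%:R))%:E
            | eta in [set: word m]].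

Definition Keps (eps a : R) : \bar R :=
  ereal_sup [set ((size eta).+1%:R * (1 + a) ^+ size eta / (1 + eps) ^+ size eta)%:E
            | eta in [set: word m]].

Definition composition_bound (M : R) (l : nat) : Prop :=
  forall (c : word m -> 'I_l -> K) (d : word m -> 'I_m -> K),
    (linf_norm M c < +oo)%E -> (linf_norm M d < +oo)%E ->
    forall eps : R,
      phi (m%:R * fine (linf_norm M d)) < eps ->
      (linf_norm (M * (1 + eps)) (comp c d) < +oo)%E /\
      (linf_norm (M * (1 + eps)) (comp c d)
        <= linf_norm M c * Keps eps (phi (m%:R * fine (linf_norm M d))))%E.

End Norms.

(* Main.v *)
Require Import Defs.
From HB Require Import structures.
From mathcomp Require Import all_boot all_order all_algebra.
From mathcomp Require Import all_classical all_reals.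
From mathcomp Require Import ereal.
From mathcomp.real_closed Require Import complex.
From mathcomp.algebra_tactics Require Import ring lra.
Import Order.TTheory GRing.Theory Num.Theory.
Local Open Scope ring_scope.

Set Implicit Arguments.
Unset Strict Implicit.
Unset Printing Implicit Defensive.


Lemma big_tuple_cons (T : finType) (R' : Type) (idx : R') (op : Monoid.com_law idx)
  n (F : n.+1.-tuple T -> R') :
  \big[op/idx]_(u : n.+1.-tuple T) F u =
  \big[op/idx]_(x : T) \big[op/idx]_(u : n.-tuple T) F [tuple of x :: u].
Proof.
rewrite pair_big /=.
rewrite (reindex (fun p : T * n.-tuple T => [tuple of p.1 :: p.2])) //=.
exists (fun u : n.+1.-tuple T => (thead u, [tuple of behead u])).
  by move=> [x t] _ /=; congr pair; apply: val_inj.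
by move=> u _; case/tupleP: u => x t; apply: val_inj.
Qed.

Lemma sum_tuple_cons_nat (T : finType) n (F : n.+1.-tuple T -> nat) :
  (\sum_(u : n.+1.-tuple T) F u =
  \sum_(x : T) \sum_(u : n.-tuple T) F [tuple of x :: u])%N.
Proof. exact: (big_tuple_cons addn). Qed.

Lemma sum_tuple_cons_R (T : finType) (V : nmodType) n (F : n.+1.-tuple T -> V) :
  \sum_(u : n.+1.-tuple T) F u =
  \sum_(x : T) \sum_(u : n.-tuple T) F [tuple of x :: u].
Proof. exact: (big_tuple_cons +%R). Qed.

Lemma big_tuple0 (T : finType) (R' : Type) (idx : R') (op : Monoid.com_law idx)
  (F : 0.-tuple T -> R') :
  \big[op/idx]_(u : 0.-tuple T) F u = F [tuple].
Proof.
by rewrite (big_pred1 [tuple]) // => u; apply/esym/eqP; exact: tuple0.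
Qed.

Lemma shw_nil_r (T : Type) (u : seq T) : shw u [::] = [:: u].
Proof. by case: u. Qed.

Lemma count_mem_map_cons (T : eqType) (a c : T) (nu : seq T) (s : seq (seq T)) :
  count_mem (c :: nu) (map (cons a) s) = ((a == c) * count_mem nu s)%N.
Proof.
rewrite count_map; case: eqP => [->|ne] /=.
  by rewrite mul1n; apply: eq_count => w /=; rewrite eqseq_cons eqxx.
rewrite mul0n; apply/eqP; rewrite -leqn0 leqNgt -has_count; apply/hasP => -[w _] /=.
by rewrite eqseq_cons => /andP[/eqP] .
Qed.

Lemma sum_tuple_eq (T : finType) n (s : seq T) : size s = n ->
  (\sum_(v : n.-tuple T) ((val v == s) : nat))%N = 1%N.
Proof.
move=> hs; rewrite (bigD1 (Tuple (introT eqP hs))) //= eqxx add1n big1 // => v.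
by rewrite -val_eqE /= => /negbTE ->.
Qed.

Lemma sum_pick (T : finType) (c : T) (Y : nat) :
  (\sum_(a : T) ((a == c) * Y))%N = Y.
Proof.
rewrite (bigD1 c) //= eqxx mul1n big1 ?addn0 // => a /= ne; by rewrite (negbTE ne) mul0n.
Qed.

Lemma sum_pick2 (T I J : finType) (c : T) (F : I -> J -> nat) :
  (\sum_(a : T) \sum_(u : I) \sum_(v : J) ((a == c) * F u v))%N =
  (\sum_(u : I) \sum_(v : J) F u v)%N.
Proof.
rewrite (bigD1 c) //= [X in (_ + X)%N]big1 ?addn0.
  by apply: eq_bigr => u _; apply: eq_bigr => v _; rewrite eqxx mul1n.
move=> a /= ne; apply: big1 => u _; apply: big1 => v _.
by rewrite (negbTE ne).
Qed.

Lemma count_shw (T : finType) (nu : seq T) (i j : nat) :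
  size nu = (i + j)%N ->
  (\sum_(u : i.-tuple T) \sum_(v : j.-tuple T) count_mem nu (shw (u : seq T) (v : seq T)))%N
  = 'C(i + j, i).
Proof.
elim: nu i j => [|c nu IH] i j.
  case: i j => [|i] [|j] // _.
  by rewrite !big_tuple0.
case: i => [|i].
  rewrite add0n => hs; rewrite big_tuple0 bin0 -(sum_tuple_eq hs).
  by apply: eq_bigr => v _ /=; rewrite addn0.
case: j => [|j].
  rewrite addn0 binn => hs; rewrite -(sum_tuple_eq hs).
  by apply: eq_bigr => u _; rewrite big_tuple0 /= shw_nil_r /= addn0.
move=> /= [hs].
have pw : forall (U : i.+1.-tuple T) (V : j.+1.-tuple T),
  count_mem (c :: nu) (shw (U : seq T) (V : seq T)) =
  ((thead U == c) * count_mem nu (shw (behead U) V) +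
   (thead V == c) * count_mem nu (shw U (behead V)))%N.
  move=> U V; case/tupleP: U => a u; case/tupleP: V => b v /=.
  by rewrite count_cat !count_mem_map_cons.
under eq_bigr => U _ do under eq_bigr => V _ do rewrite pw.
under eq_bigr => U _ do rewrite big_split.
rewrite big_split addSn binS addnC.
congr addn.
  rewrite -(IH i j.+1 hs) sum_tuple_cons_nat /=.
  exact: sum_pick2.
rewrite -addSnnS -IH; last by rewrite hs addSnnS.
apply: eq_bigr => U _; rewrite sum_tuple_cons_nat /=.
rewrite (bigD1 c) //= [X in (_ + X)%N]big1 ?addn0.
  by apply: eq_bigr => v _; rewrite eqxx mul1n.
move=> b /= ne; apply: big1 => v _.
by rewrite (negbTE ne).
Qed.



Section Generic.
Variable R : realType.
Variable K : comNzRingType.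
Variable absK : K -> R.
Hypothesis absK_ge0 : forall x, 0 <= absK x.
Hypothesis absKD : forall x y, absK (x + y) <= absK x + absK y.
Hypothesis absKM : forall x y, absK (x * y) <= absK x * absK y.
Hypothesis absK0 : absK 0 = 0.
Hypothesis absK1 : absK 1 <= 1.
Hypothesis absKMn : forall x n, absK (x *+ n) <= absK x *+ n.

Lemma absK_sum (I : Type) (r : seq I) (P : pred I) (F : I -> K) :
  absK (\sum_(i <- r | P i) F i) <= \sum_(i <- r | P i) absK (F i).
Proof.
elim/big_rec2: _ => [|i y1 y2 _ H]; first by rewrite absK0.
by apply: le_trans (absKD _ _) _; rewrite lerD2l.
Qed.

Lemma absK_nat (b : bool) : absK (b%:R) <= 1.
Proof. by case: b => //=; rewrite absK0. Qed.

Variable m : nat.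

Lemma shuffle_abs (a b : series K m) (nu : word m) :
  absK (shuffle a b nu) <=
  \sum_(i < (size nu).+1) \sum_(u : i.-tuple 'I_m.+1)
     \sum_(v : (size nu - i).-tuple 'I_m.+1)
        absK (a u) * absK (b v) * (count_mem nu (shw (u : seq _) (v : seq _)))%:R.
Proof.
rewrite /shuffle; apply: le_trans (absK_sum _ _ _) _; apply: ler_sum => i _.
apply: le_trans (absK_sum _ _ _) _; apply: ler_sum => u _.
apply: le_trans (absK_sum _ _ _) _; apply: ler_sum => v _.
apply: le_trans (absKMn _ _) _; rewrite -[X in X <= _]mulr_natr; apply: ler_wpM2r => //.
Qed.

Lemma shuffle_bound (a b : series K m) (alpha beta : nat -> R) (nu : word m) :
  (forall u, absK (a u) <= alpha (size u)) ->
  (forall v, absK (b v) <= beta (size v)) ->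
  absK (shuffle a b nu) <=
  \sum_(i < (size nu).+1) 'C(size nu, i)%:R * alpha i * beta (size nu - i)%N.
Proof.
move=> ha hb; apply: le_trans (shuffle_abs _ _ _) _; apply: ler_sum => i _.
have -> : 'C(size nu, i) = 'C(i + (size nu - i), i) by rewrite subnKC // -ltnS.
rewrite -(@count_shw _ nu i (size nu - i)); last by rewrite subnKC // -ltnS.
rewrite natr_sum.
rewrite !mulr_suml; apply: ler_sum => u _; rewrite natr_sum !mulr_suml.
apply: ler_sum => v _; rewrite mulrC -mulrA; apply: ler_wpM2l => //.
have hau := ha u; have hbv := hb v; rewrite size_tuple in hau; rewrite size_tuple in hbv.
by apply: ler_pM; rewrite ?absK_ge0.
Qed.

Lemma shuffle_bound_fam (E : finType) (a : series K m) (b : E -> series K m)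
   (alpha beta : nat -> R) (nu : word m) :
  (forall t, 0 <= alpha t) ->
  (forall u, absK (a u) <= alpha (size u)) ->
  (forall v, \sum_(e : E) absK (b e v) <= beta (size v)) ->
  \sum_(e : E) absK (shuffle a (b e) nu) <=
  \sum_(i < (size nu).+1) 'C(size nu, i)%:R * alpha i * beta (size nu - i)%N.
Proof.
move=> ha0 ha hb.
apply: le_trans (ler_sum _ (fun e _ => shuffle_abs a (b e) nu)) _.
rewrite exchange_big; apply: ler_sum => i _ /=.
rewrite exchange_big /=.
under eq_bigr => u _ do rewrite exchange_big /=.
have -> : 'C(size nu, i) = 'C(i + (size nu - i), i) by rewrite subnKC // -ltnS.
rewrite -(@count_shw _ nu i (size nu - i)); last by rewrite subnKC // -ltnS.
rewrite natr_sum !mulr_suml; apply: ler_sum => u _; rewrite natr_sum !mulr_suml.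
apply: ler_sum => v _.
under eq_bigr => e _ do rewrite mulrAC.
rewrite -mulr_sumr [absK (a u) * _]mulrC.
have hau := ha u; have hbv := hb v; rewrite size_tuple in hau; rewrite size_tuple in hbv.
apply: ler_pM => //.
all: try (by rewrite mulr_ge0 ?absK_ge0).
all: try (by apply: sumr_ge0 => e _; rewrite absK_ge0).
by apply: ler_wpM2l.
Qed.

End Generic.



Section Psi.
Variable R : realType.
Variable K : comNzRingType.
Variable absK : K -> R.
Hypothesis absK_ge0 : forall x, 0 <= absK x.
Hypothesis absKD : forall x y, absK (x + y) <= absK x + absK y.
Hypothesis absKM : forall x y, absK (x * y) <= absK x * absK y.
Hypothesis absK0 : absK 0 = 0.
Hypothesis absK1 : absK 1 <= 1.
Hypothesis absKMn : forall x n, absK (x *+ n) <= absK x *+ n.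
Variable m : nat.
Variables (D M : R).
Hypothesis D0 : 0 <= D.
Hypothesis M0 : 0 < M.
Variable d : word m -> 'I_m -> K.
Hypothesis hd : forall w j, absK (d w j) <= D * M ^+ size w * (size w)`!%:R.

Definition deltai (i : 'I_m.+1) (t : nat) : R :=
  if i == ord0 then (t == 0)%:R else D * M ^+ t * t`!%:R.

Definition delta (t : nat) : R := (t == 0)%:R + m%:R * D * M ^+ t * t`!%:R.

Fixpoint Bk (k n : nat) : R :=
  match k with
  | 0 => (n == 0)%:R
  | k'.+1 => match n with
             | 0 => 0
             | n'.+1 => \sum_(t < n'.+1) 'C(n', t)%:R * delta t * Bk k' (n' - t)
             end
  end.

Lemma deltai_ge0 i t : 0 <= deltai i t.
Proof.
rewrite /deltai; case: ifP => _; first by rewrite ler0n.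
by rewrite !mulr_ge0 // ltW // exprn_gt0.
Qed.

Lemma delta_ge0 t : 0 <= delta t.
Proof.
rewrite /delta addr_ge0 ?ler0n //.
by rewrite !mulr_ge0 // ltW // exprn_gt0.
Qed.

Lemma Bk_ge0 k n : 0 <= Bk k n.
Proof.
elim: k n => [|k IH] n; first by rewrite /= ler0n.
case: n => [|n] //=.
apply: sumr_ge0 => t _; rewrite !mulr_ge0 ?delta_ge0 //.
Qed.

Lemma dcomp_bound i u : absK (dcomp d i u) <= deltai i (size u).
Proof.
rewrite /dcomp /deltai; case: unliftP => [j ->|->].
  by rewrite eq_sym (negbTE (neq_lift _ _)).
rewrite eqxx /one_series.
by case: u => [|x u] /=; rewrite ?absK0.
Qed.

Lemma sum_deltai t : \sum_(i < m.+1) deltai i t = delta t.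
Proof.
rewrite big_ord_recl /deltai eqxx /delta; congr (_ + _).
rewrite (eq_bigr (fun _ => D * M ^+ t * t`!%:R)) //.
by rewrite sumr_const card_ord -[_ *+ m]mulr_natl !mulrA.
Qed.

Lemma psi_bound k (nu : word m) :
  \sum_(eta : k.-tuple 'I_m.+1) absK (psi d eta (@one_series K m) nu) <= Bk k (size nu).
Proof.
elim: k nu => [|k IH] nu.
  rewrite big_tuple0 /= /one_series.
  by case: nu => [|x nu] /=; rewrite ?eqxx ?absK0.
rewrite sum_tuple_cons_R /=.
case: nu => [|x nu] /=.
  by rewrite big1 // => i _; rewrite big1 // => eta _; rewrite absK0.
apply: (@le_trans _ _ (\sum_(i < m.+1) \sum_(eta : k.-tuple 'I_m.+1)
     absK (shuffle (dcomp d i) (psi d eta (@one_series K m)) nu))).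
  apply: ler_sum => i _; apply: ler_sum => eta _.
  apply: le_trans (absKM _ _) _; rewrite -[X in _ <= X]mul1r.
  by apply: ler_wpM2r; rewrite ?absK_ge0 ?absK_nat.
apply: (@le_trans _ _ (\sum_(i < m.+1) \sum_(t < (size nu).+1)
    'C(size nu, t)%:R * deltai i t * Bk k (size nu - t)%N)).
  apply: ler_sum => i _.
  apply: (shuffle_bound_fam absK_ge0 absKD absKM absK0 absKMn).
  - by move=> t; apply: deltai_ge0.
  - by move=> u; apply: dcomp_bound.
  - by move=> v; apply: IH.
rewrite exchange_big; apply: ler_sum => t _ /=.
under eq_bigr => i _ do rewrite mulrAC.
by rewrite -mulr_sumr sum_deltai mulrAC.
Qed.

End Psi.



Section Poly.
Variable R : realType.
Variable m : nat.
Variables (D M : R).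
Hypothesis D0 : 0 <= D.
Hypothesis M0 : 0 < M.

Let a := m%:R * D.
Lemma a_ge0 : 0 <= a. Proof. by rewrite /a mulr_ge0. Qed.

Definition Ppoly (N : nat) : {poly R} :=
  \poly_(i < N.+2) ((i == 1)%:R + a / i%:R).

Lemma Ppoly_ge0 N i : 0 <= (Ppoly N)`_i.
Proof.
rewrite coef_poly; case: ifP => // _.
by rewrite addr_ge0 ?ler0n // divr_ge0 ?ler0n ?a_ge0.
Qed.

Lemma Ppoly0 N : (Ppoly N)`_0 = 0.
Proof. by rewrite coef_poly /= invr0 mulr0 addr0. Qed.

Lemma PpolyX_ge0 N k i : 0 <= ((Ppoly N) ^+ k)`_i.
Proof.
elim: k i => [|k IH] i; first by rewrite expr0 coef1 ler0n.
rewrite exprS coefM; apply: sumr_ge0 => j _.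
by rewrite mulr_ge0 ?Ppoly_ge0.
Qed.

Lemma Ppoly_deriv N t : (t <= N)%N -> (Ppoly N)^`()`_t = (t == 0)%:R + a.
Proof.
move=> htN; rewrite coef_deriv coef_poly ltnS ltnS htN.
rewrite mulrnDl; congr (_ + _).
  by case: t {htN} => [|t] //=; rewrite mul0rn.
by rewrite -[_ *+ t.+1]mulr_natr mulfVK // pnatr_eq0.
Qed.

Lemma Bk_poly N k n : (n <= N)%N ->
  M ^+ k * k`!%:R * Bk m D M k n <= M ^+ n * n`!%:R * ((Ppoly N) ^+ k)`_n.
Proof.
elim: k n => [|k IH] n hn.
  rewrite /= expr0 coef1 fact0 !mul1r.
  case: n hn => [|n] _ /=; first by rewrite expr0 mul1r fact0 mulr1.
  by rewrite mulr0.
case: n hn => [|n] hn /=.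
  by rewrite mulr0 mulr_ge0 ?PpolyX_ge0 // mulr_ge0 // ltW // exprn_gt0.
have hd := deriv_exp (Ppoly N) k.+1.
have hc := congr1 (fun p : {poly R} => p`_n) hd.
rewrite /= coef_deriv coefMn coefM in hc.
have -> : M ^+ n.+1 * n.+1`!%:R * ((Ppoly N) ^+ k.+1)`_n.+1 =
   M ^+ n.+1 * n`!%:R * (((Ppoly N) ^+ k.+1)`_n.+1 *+ n.+1).
  by rewrite factS natrM -mulr_natr; ring.
rewrite hc -sumrMnl !mulr_sumr; apply: ler_sum => t _.
have ht : (t <= n)%N by rewrite -ltnS.
rewrite Ppoly_deriv; last by apply: leq_trans hn; rewrite ltnW // ltnS.
have IHt := IH (n - t)%N (leq_trans (leq_subr _ _) (ltnW hn)).
have key : forall t : nat, (t <= n)%N -> 'C(n, t)%:R * delta m D M t * (M ^+ (n - t) * (n - t)`!%:R) =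
    M ^+ n * n`!%:R * ((t == 0)%:R + a).
  clear; move=> [|t] ht.
    rewrite bin0 subn0 /delta /= expr0 fact0 /a; ring.
  have hf := bin_fact ht.
  have hM : M ^+ n = M ^+ t.+1 * M ^+ (n - t.+1) by rewrite -exprD subnKC.
  rewrite /delta (_ : ((t.+1 == 0)%N : nat) = 0%N) // hM -hf.
  set f1 := (t.+1)`!; set f2 := (n - t.+1)`!; set c := 'C(n, t.+1).
  rewrite !natrM /a; ring.
apply: (@le_trans _ _ (k.+1%:R * M * ('C(n, t)%:R * delta m D M t) *
     (M ^+ (n - t) * (n - t)`!%:R * ((Ppoly N) ^+ k)`_(n - t)))).
  have -> : M ^+ k.+1 * k.+1`!%:R * ('C(n, t)%:R * delta m D M t * Bk m D M k (n - t)) =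
      k.+1%:R * M * ('C(n, t)%:R * delta m D M t) * (M ^+ k * k`!%:R * Bk m D M k (n - t)).
    by rewrite factS natrM exprS; ring.
  apply: ler_wpM2l => //.
  by rewrite !mulr_ge0 ?ler0n ?(delta_ge0 m D0 M0) // ltW.
have -> : k.+1%:R * M * ('C(n, t)%:R * delta m D M t) *
     (M ^+ (n - t) * (n - t)`!%:R * ((Ppoly N) ^+ k)`_(n - t)) =
  k.+1%:R * M * ('C(n, t)%:R * delta m D M t * (M ^+ (n - t) * (n - t)`!%:R)) *
     ((Ppoly N) ^+ k)`_(n - t) by ring.
rewrite (key t ht) -mulr_natr exprS; rewrite le_eqVlt; apply/orP; left; apply/eqP; ring.
Qed.

Variable p : R.
Hypothesis p0 : 0 <= p.
Hypothesis hp : p ^+ 2 = a * (1 + p).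
Let q := 1 + p.

Lemma a_le_p : a <= p.
Proof.
have := a_ge0; have := hp; rewrite expr2 => hp2 ha.
rewrite leNgt; apply/negP => hlt.
have : p * (1 + p) < a * (1 + p) by rewrite ltr_pM2r // ltr_pwDl.
move=> h; rewrite mulrDr mulr1 -hp2 in h; have := p0; lra.
Qed.

Lemma S_eq n : p * \sum_(i < n) q ^+ (n - i.+1) = q ^+ n - 1.
Proof.
elim: n => [|n IH]; first by rewrite big_ord0 mulr0 expr0 subrr.
rewrite big_ord_recr /= subnn expr0.
rewrite (eq_bigr (fun i : 'I_n => q * q ^+ (n - i.+1))); last first.
  by move=> i _; rewrite subSS -exprS -subSn.
rewrite -mulr_sumr mulrDr mulrCA IH exprS /q; ring.
Qed.

Lemma geo N n : \sum_(i < n.+2) (Ppoly N)`_i * q ^+ (n.+1 - i) <= q ^+ n.+1.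
Proof.
rewrite big_ord_recl big_ord_recl Ppoly0 mul0r add0r.
have h1 : (Ppoly N)`_(lift ord0 (@ord0 n)) <= 1 + a.
  by rewrite /Ppoly coef_poly /= /bump /= divr1.
have h2 : forall i : 'I_n, (Ppoly N)`_(lift ord0 (lift ord0 i)) <= a.
  move=> i; rewrite /Ppoly coef_poly /= /bump /=; case: ifP => _; last exact: a_ge0.
  rewrite add0r ler_pdivrMr ?ltr0n //.
  by rewrite ler_peMr ?a_ge0 // ler1n.
have hS := S_eq n.
apply: (@le_trans _ _ ((1 + a) * q ^+ n + a * \sum_(i < n) q ^+ (n - i.+1))).
  apply: lerD.
    by rewrite /= subn1 /=; apply: ler_wpM2r => //; rewrite exprn_ge0 // /q addr_ge0.
  rewrite mulr_sumr; apply: ler_sum => i _ /=.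
  rewrite subSS; apply: ler_wpM2r; first by rewrite exprn_ge0 // /q addr_ge0.
  exact: h2.
set S := \sum_(i < n) _ in hS *.
have S0 : 0 <= S by apply: sumr_ge0 => i _; rewrite exprn_ge0 // /q addr_ge0.
have Q1 : 1 <= q ^+ n by rewrite exprn_ege1 // /q lerDl.
have hap := a_le_p.
rewrite exprS; set Q := q ^+ n in hS Q1 *.
rewrite /q in hS *.
have ha0 := a_ge0.
have := p0; rewrite le_eqVlt => /orP[/eqP p00|pp].
  have a0 : a = 0 by apply/eqP; rewrite eq_le a_ge0 andbT p00.
  rewrite a0 -p00; lra.
have e1 : a * (p * S) = a * (Q - 1) by rewrite hS.
have e2 : p ^+ 2 * Q = a * (1 + p) * Q by rewrite hp.
rewrite expr2 in e2.
have key : p * ((1 + p) * Q - (1 + a) * Q - a * S) = a by lra.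
have : 0 <= (1 + p) * Q - (1 + a) * Q - a * S by rewrite -(pmulr_rge0 _ pp) key.
rewrite mulrC; lra.
Qed.

Lemma U_bound N n : (n <= N)%N -> \sum_(k < N.+1) ((Ppoly N) ^+ k)`_n <= q ^+ n.
Proof.
elim/ltn_ind: n => n IH hn.
rewrite big_ord_recl expr0 coef1.
have step : \sum_(k < N) ((Ppoly N) ^+ (lift ord0 k))`_n <=
    \sum_(i < n.+1) (Ppoly N)`_i * \sum_(k < N.+1) ((Ppoly N) ^+ k)`_(n - i).
  under eq_bigr => k _ do rewrite lift0 exprS coefM.
  rewrite exchange_big; apply: ler_sum => i _ /=.
  rewrite -mulr_sumr; apply: ler_wpM2l; first exact: Ppoly_ge0.
  rewrite big_ord_recr /= lerDl; exact: PpolyX_ge0.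
apply: (le_trans (lerD (lexx _) step)).
case: n IH hn {step} => [|n] IH hn.
  by rewrite big_ord_recl big_ord0 /= Ppoly0 mul0r !addr0 expr0.
rewrite add0r; apply: le_trans (geo N n).
apply: ler_sum => i _; case: i => [[|i] hi] /=.
  by rewrite Ppoly0 !mul0r.
apply: ler_wpM2l; first exact: Ppoly_ge0.
apply: IH; first by rewrite subSS ltnS leq_subr.
by apply: leq_trans hn; rewrite leq_subr.
Qed.

End Poly.



Section Final.
Variable R : realType.
Variable K : comNzRingType.
Variable absK : K -> R.
Hypothesis absK_ge0 : forall x, 0 <= absK x.
Hypothesis absKD : forall x y, absK (x + y) <= absK x + absK y.
Hypothesis absKM : forall x y, absK (x * y) <= absK x * absK y.
Hypothesis absK0 : absK 0 = 0.
Hypothesis absK1 : absK 1 <= 1.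
Hypothesis absKMn : forall x n, absK (x *+ n) <= absK x *+ n.
Variable m : nat.
Variable M : R.
Hypothesis M0 : 0 < M.

Lemma comp_coef_bound l (c : word m -> 'I_l -> K) (d : word m -> 'I_m -> K) (C D p : R) :
  0 <= C -> 0 <= D -> 0 <= p -> p ^+ 2 = m%:R * D * (1 + p) ->
  (forall w j, absK (c w j) <= C * (M ^+ size w * (size w)`!%:R)) ->
  (forall w j, absK (d w j) <= D * M ^+ size w * (size w)`!%:R) ->
  forall nu j, absK (Defs.comp c d nu j) <= C * (M ^+ size nu * (size nu)`!%:R * (1 + p) ^+ size nu).
Proof.
move=> C0 D0 p0 hp hc hd nu j.
rewrite /Defs.comp; apply: le_trans (absK_sum absKD absK0 _ _ _) _.
apply: (@le_trans _ _ (\sum_(k < (size nu).+1) C * (M ^+ size nu * (size nu)`!%:R *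
          ((Ppoly m D (size nu)) ^+ k)`_(size nu)))).
  apply: ler_sum => k _.
  apply: le_trans (absK_sum absKD absK0 _ _ _) _.
  apply: (@le_trans _ _ (\sum_(eta : k.-tuple 'I_m.+1) C * (M ^+ k * k`!%:R) *
        absK (psi d eta (@one_series K m) nu))).
    apply: ler_sum => eta _; apply: le_trans (absKM _ _) _.
    apply: ler_wpM2r; first exact: absK_ge0.
    by have := hc eta j; rewrite size_tuple.
  rewrite -mulr_sumr -mulrA; apply: ler_wpM2l => //.
  apply: le_trans (Bk_poly m D0 M0 k (leqnn (size nu))).
  apply: ler_wpM2l; first by rewrite mulr_ge0 // ltW // exprn_gt0.
  exact: (psi_bound absK_ge0 absKD absKM absK0 absK1 absKMn D0 M0 hd).
rewrite -mulr_sumr -mulr_sumr; apply: ler_wpM2l => //.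
apply: ler_wpM2l; first by rewrite mulr_ge0 // ltW // exprn_gt0.
exact: (U_bound D0 p0 hp (leqnn _)).
Qed.

Lemma vabs_ge0 l (z : 'I_l -> K) : 0 <= vabs absK z.
Proof.
rewrite /vabs; elim/big_rec: _ => // i x _ hx.
by rewrite le_max hx orbT.
Qed.

Lemma abs_le_vabs l (z : 'I_l -> K) j : absK (z j) <= vabs absK z.
Proof. exact: le_bigmax. Qed.

Lemma vabs_le l (z : 'I_l -> K) B : 0 <= B -> (forall j, absK (z j) <= B) -> vabs absK z <= B.
Proof. by move=> B0 h; apply: bigmax_le. Qed.

Lemma linf_ge0 l (c : word m -> 'I_l -> K) (M' : R) : 0 < M' ->
  (0 <= linf_norm absK M' c)%E.
Proof.
move=> M'0.
apply: (@le_trans _ _ ((vabs absK (c [::]) / (M' ^+ 0 * 0`!%:R))%:E)).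
  by rewrite lee_fin divr_ge0 ?vabs_ge0 // expr0 mul1r.
by apply: ereal_sup_ubound; exists [::].
Qed.

Lemma linf_coef l (c : word m -> 'I_l -> K) (M' : R) : 0 < M' ->
  (linf_norm absK M' c < +oo)%E ->
  forall w j, absK (c w j) <= fine (linf_norm absK M' c) * (M' ^+ size w * (size w)`!%:R).
Proof.
move=> M'0 hfin w j.
have fin : linf_norm absK M' c \is a fin_num by rewrite ge0_fin_numE ?linf_ge0.
have h : ((vabs absK (c w) / (M' ^+ size w * (size w)`!%:R))%:E <= linf_norm absK M' c)%E.
  by apply: ereal_sup_ubound; exists w.
rewrite -(fineK fin) lee_fin ler_pdivrMr in h; last first.
  by rewrite mulr_gt0 ?exprn_gt0 // ltr0n fact_gt0.
exact: le_trans (abs_le_vabs _ _) h.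
Qed.

Lemma phi_ge0 (x : R) : 0 <= x -> 0 <= phi x.
Proof. by move=> x0; rewrite /phi addr_ge0 ?sqrtr_ge0 // divr_ge0. Qed.

Lemma phi_eq (x : R) : 0 <= x -> phi x ^+ 2 = x * (1 + phi x).
Proof.
move=> x0; rewrite /phi.
have hs : Num.sqrt (x ^+ 2 / 4 + x) ^+ 2 = x ^+ 2 / 4 + x.
  by rewrite sqr_sqrtr // addr_ge0 // divr_ge0 // sqr_ge0.
set s := Num.sqrt _ in hs *.
apply/eqP; rewrite -subr_eq0.
have -> : (x / 2 + s) ^+ 2 - x * (1 + (x / 2 + s)) = s ^+ 2 - (x ^+ 2 / 4 + x) by field.
by rewrite hs subrr.
Qed.

Lemma main_generic l : composition_bound absK m M l.
Proof.
move=> c d hc hd eps heps.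
set D := fine (linf_norm absK M d).
set C := fine (linf_norm absK M c).
have finc : linf_norm absK M c \is a fin_num by rewrite ge0_fin_numE ?linf_ge0.
have D0 : 0 <= D by apply: fine_ge0; apply: linf_ge0.
have C0 : 0 <= C by apply: fine_ge0; apply: linf_ge0.
set a := m%:R * D in heps *.
have a0 : 0 <= a by rewrite mulr_ge0.
set p := phi a in heps *.
have p0 : 0 <= p by apply: phi_ge0.
have hp : p ^+ 2 = m%:R * D * (1 + p) by apply: phi_eq.
have hcC := linf_coef M0 hc.
have hdD : forall w j, absK (d w j) <= D * M ^+ size w * (size w)`!%:R.
  by move=> w j; rewrite -mulrA; apply: linf_coef.
have hcomp := comp_coef_bound C0 D0 p0 hp hcC hdD.
have eps0 : 0 < eps by apply: le_lt_trans heps.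
have key : (linf_norm absK (M * (1 + eps)) (Defs.comp c d) <= C%:E)%E.
  apply: ge_ereal_sup => x [w _ <-].
  rewrite lee_fin ler_pdivrMr; last first.
    by rewrite mulr_gt0 ?exprn_gt0 ?ltr0n ?fact_gt0 // mulr_gt0 // addr_gt0.
  apply: vabs_le; first by rewrite !mulr_ge0 // ?exprn_ge0 // ?ltW // ?mulr_gt0 // addr_gt0.
  move=> j; apply: le_trans (hcomp w j) _.
  rewrite exprMn mulrAC -mulrA; apply: ler_wpM2l => //.
  rewrite -mulrA; apply: ler_wpM2l; first by rewrite exprn_ge0 // ltW.
  apply: ler_wpM2r => //.
  have h1 : 1 + p <= 1 + eps by rewrite lerD2l ltW.
  by apply: lerXn2r => //; rewrite nnegrE addr_ge0 // ltW.
split; first by apply: le_lt_trans key _; rewrite ltry.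
apply: le_trans key _.
rewrite -/C -[X in (_ <= X * _)%E](fineK finc) -/C.
apply: lee_pemulr; first by rewrite lee_fin.
apply: (@le_trans _ _ (((size ([::] : word m)).+1%:R * (1 + p) ^+ size ([::] : word m)
    / (1 + eps) ^+ size ([::] : word m))%:E)).
  by rewrite /= !expr0 divr1 mulr1.
by apply: ereal_sup_ubound; exists [::].
Qed.

End Final.


Theorem lemma3p7 (R : realType) (M : R) (hM : 0 < M) (l m : nat) :
  composition_bound (K := R) (fun z => `|z|) m M l /\
  composition_bound (K := R[i]) (@Normc.normc R) m M l.
Proof.
split.
  apply: main_generic => //.
  all: try (by move=> x y; apply: ler_normD).
  all: try (by move=> x y; rewrite normrM).
  all: try (by rewrite normr1).
  all: try (by rewrite normr0).
  all: try (by move=> x n; rewrite normrMn).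
apply: main_generic => //.
all: try (by case=> x y; rewrite /Normc.normc sqrtr_ge0).
all: try (by move=> x y; apply: (@le_normcD R x y)).
all: try (by move=> x y; rewrite Normc.normcM).
all: try (by rewrite Normc.normc0).
all: try (by rewrite Normc.normc1).
all: try (by move=> x n; rewrite normcMn).
Qed.
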